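(* There exist constants $K_1,K_2$ such that for every $\varepsilon>0$, $$\sum_{n\le x}\frac{1}{\beta(n)}=K_1\log x+K_2+O\!\left(x^{-1+\varepsilon}\right)\qquad (x\to\infty),$$ where $K_1=\prod_p\left(1-\frac1p\right)\left(1+\sum_{a=1}^{\infty}\frac{1}{\beta(p^a)}\right)$, the product being over all primes.
   Context: $\beta$ is the multiplicative arithmetic function with $\beta(1)=1$ and $\beta(p^a)=\frac{p^{a+1}+(-1)^a}{p+1}$ for every prime power $p^a$ ($a\ge1$); equivalently $\beta(n)=\sum_{d\mid n}d\,\lambda(n/d)$ with $\lambda$ the Liouville function. *)

(* Defs.v *)
From mathcomp Require Import all_boot.
From Stdlib Require Import Reals.

Definition beta_pp (p a : nat) : R :=
  Rdiv (Rplus (pow (INR p) (a + 1)) (pow (Ropp R1) a)) (Rplus (INR p) R1).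

Definition beta (n : nat) : R :=
  foldr (fun p acc => Rmult (beta_pp p (logn p n)) acc) R1 (primes n).

Definition sum_inv_beta (N : nat) : R :=
  foldr (fun n acc => Rplus (Rinv (beta n)) acc) R0 (iota 1 N).

Definition partial_euler_prod (f : nat -> R) (N : nat) : R :=
  foldr (fun p acc => Rmult (Rmult (Rminus R1 (Rinv (INR p))) (Rplus R1 (f p))) acc)
        R1 [seq p <- iota 0 N | prime p].

(* Main.v *)
Require Import Defs.
From HB Require Import structures.
From Stdlib Require Import Reals Lra Lia.
From mathcomp Require Import all_boot zify.
Open Scope R_scope.

HB.instance Definition _ := Monoid.isComLaw.Build R 0 Rplus (fun x y z => esym (Rplus_assoc x y z)) Rplus_comm Rplus_0_l.
HB.instance Definition _ := Monoid.isComLaw.Build R 1 Rmult (fun x y z => esym (Rmult_assoc x y z)) Rmult_comm Rmult_1_l.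
HB.instance Definition _ := Monoid.isMulLaw.Build R 0 Rmult Rmult_0_l Rmult_0_r.
HB.instance Definition _ := Monoid.isAddLaw.Build R Rmult Rplus Rmult_plus_distr_r Rmult_plus_distr_l.

Notation "\rsum_ ( i <- r ) F" := (\big[Rplus/0]_(i <- r) F)
  (at level 41, F at level 41, i, r at level 50).
Notation "\rprod_ ( i <- r ) F" := (\big[Rmult/1]_(i <- r) F)
  (at level 36, F at level 36, i, r at level 50).

Definition mult (h : nat -> nat -> R) (n : nat) : R :=
  \rprod_(p <- primes n) h p (logn p n).

Definition multiplicative (F : nat -> R) :=
  F 1%N = 1 /\ forall m n, coprime m n -> F (m * n)%N = F m * F n.

Lemma beta_mult n : beta n = mult beta_pp n.
Proof. by rewrite /beta /mult unlock. Qed.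

Lemma mult_multiplicative h : multiplicative (mult h).
Proof.
split; first by rewrite /mult /= big_nil.
move=> m n cop.
have [m0|m0] := posnP m.
  rewrite m0 in cop *; move: cop; rewrite /coprime; move/eqP; rewrite gcd0n => ->.
  by rewrite muln1 {3}/mult /= big_nil Rmult_1_r.
have [n0|n0] := posnP n.
  rewrite n0 in cop *; move: cop; rewrite /coprime; move/eqP; rewrite gcdn0 => ->.
  by rewrite mul1n {2}/mult /= big_nil Rmult_1_l.
have disj : forall p, p \in primes m -> p \notin primes n.
  move=> p; rewrite !mem_primes => /and3P[pp _ pm]; apply/negP => /and3P[_ _ pn].
  have := cop; rewrite /coprime => /eqP g1.
  have : p %| gcdn m n by rewrite dvdn_gcd pm pn.
  by rewrite g1 dvdn1 => /eqP p1; move: pp; rewrite p1.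
have pe : perm_eq (primes (m * n)) (primes m ++ primes n).
  apply: uniq_perm; first exact: primes_uniq.
    rewrite cat_uniq !primes_uniq /= andbT; apply/hasPn => p pn; apply/negP => pm.
    by move: (disj p pm); rewrite pn.
  by move=> p; rewrite primesM // mem_cat.
rewrite /mult (perm_big _ pe) big_cat /=; congr Rmult.
  apply: eq_big_seq => p pm; rewrite lognM // (@logn_coprime p n) ?addn0 //.
  rewrite prime_coprime; last by move: pm; rewrite mem_primes => /andP[].
  by apply/negP => pn; move: (disj p pm); rewrite mem_primes pn n0 /=; move: pm; rewrite mem_primes => /andP[->].
apply: eq_big_seq => p pn; rewrite lognM // (@logn_coprime p m) ?add0n //.
rewrite prime_coprime; last by move: pn; rewrite mem_primes => /andP[].
apply/negP => pm; have : p \in primes m by rewrite mem_primes pm m0; move: pn; rewrite mem_primes => /andP[->].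
by move/disj; rewrite pn.
Qed.

Lemma mult_pexp h p k : prime p -> (0 < k)%N -> mult h (p ^ k) = h p k.
Proof.
move=> pp k0; rewrite /mult primesX // primes_prime // big_cons big_nil pfactorK //.
by rewrite Rmult_1_r.
Qed.

Lemma coprime_pexp_prod p e (s : seq nat) (f : nat -> nat) :
  prime p -> all prime s -> p \notin s ->
  coprime (p ^ e) (\prod_(q <- s) q ^ f q).
Proof.
move=> pp; move: e; elim: s => [|q s IH] /=; first by move=> e; rewrite big_nil coprimen1.
move=> e /andP[pq ps]; rewrite in_cons negb_or => /andP[npq nps].
rewrite big_cons coprimeMr IH // andbT.
case: e => [|e]; first by rewrite coprime1n.
case: (f q) => [|k]; first by rewrite coprimen1.
rewrite coprime_pexpl // coprime_pexpr // prime_coprime // dvdn_prime2 //.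
Qed.

Lemma mult_prod_pp F (s : seq nat) (e : nat -> nat) : multiplicative F ->
  uniq s -> all prime s ->
  F (\prod_(p <- s) p ^ e p)%N = \rprod_(p <- s) F (p ^ e p)%N.
Proof.
move=> [F1 FM]; elim: s => [|p s IH] /=; first by rewrite !big_nil.
move=> /andP[ps us] /andP[pp aps].
rewrite !big_cons FM ?IH //; exact: coprime_pexp_prod.
Qed.

Lemma prod_primes n : (0 < n)%N -> n = \prod_(p <- primes n) p ^ logn p n.
Proof.
move=> n0; rewrite {1}(prod_prime_decomp n0) prime_decompE big_map //.
Qed.

Lemma all_prime_primes n : all prime (primes n).
Proof. apply/allP => p; rewrite mem_primes => /andP[] //. Qed.

Lemma mult_decomp F n : multiplicative F -> (0 < n)%N ->
  F n = \rprod_(p <- primes n) F (p ^ logn p n)%N.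
Proof.
move=> FM n0; rewrite {1}(@prod_primes n n0) mult_prod_pp //.
  exact: primes_uniq.
exact: all_prime_primes.
Qed.

Lemma mult_eq F G : multiplicative F -> multiplicative G ->
  (forall p k, prime p -> (0 < k)%N -> F (p ^ k)%N = G (p ^ k)%N) ->
  forall n, (0 < n)%N -> F n = G n.
Proof.
move=> FM GM FG n n0; rewrite (mult_decomp _ _ FM n0) (mult_decomp _ _ GM n0).
apply: eq_big_seq => p; rewrite -logn_gt0 => lp; apply: FG => //.
by move: lp; rewrite logn_gt0 mem_primes => /andP[].
Qed.

Definition Dsum (F : nat -> R) (n : nat) : R := \rsum_(d <- divisors n) F d.

Lemma Dsum_mult F : multiplicative F -> multiplicative (Dsum F).
Proof.
move=> [F1 FM]; split.
  by rewrite /Dsum (_ : divisors 1 = [:: 1%N]) // big_cons big_nil F1 Rplus_0_r.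
move=> m n cop.
have [m0|m0] := posnP m.
  rewrite m0 in cop *; move: cop; rewrite /coprime; move/eqP; rewrite gcd0n => ->.
  by rewrite muln1 /Dsum (_ : divisors 1 = [:: 1%N]) // big_cons big_nil F1 Rplus_0_r Rmult_1_r.
have [n0|n0] := posnP n.
  rewrite n0 in cop *; move: cop; rewrite /coprime; move/eqP; rewrite gcdn0 => ->.
  by rewrite mul1n /Dsum (_ : divisors 1 = [:: 1%N]) // big_cons big_nil F1 Rplus_0_r Rmult_1_l.
have mn0 : (0 < m * n)%N by rewrite muln_gt0 m0 n0.
have pe : perm_eq (divisors (m * n)) [seq (d1 * d2)%N | d1 <- divisors m, d2 <- divisors n].
  apply: uniq_perm; first exact: divisors_uniq.
    apply: allpairs_uniq; try exact: divisors_uniq.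
    move=> [d1 d2] [e1 e2] /allpairsP[[x1 x2] [/= h1 h2 [-> ->]]]
      /allpairsP[[y1 y2] [/= k1 k2 [-> ->]]] /= eq.
    rewrite -!dvdn_divisors // in h1 h2 k1 k2.
    have c1 : forall a b, a %| m -> b %| n -> gcdn m (a * b) = a.
      move=> a b am bn; rewrite Gauss_gcdl; first exact/gcdn_idPr.
      exact: coprime_dvdr bn cop.
    have c2 : forall a b, a %| m -> b %| n -> gcdn n (a * b) = b.
      move=> a b am bn; rewrite Gauss_gcdr; first exact/gcdn_idPr.
      by rewrite coprime_sym; exact: coprime_dvdl am cop.
    have ee1 : x1 = y1 by rewrite -(c1 x1 x2) // eq c1.
    have ee2 : x2 = y2 by rewrite -(c2 x1 x2) // eq c2.
    by rewrite ee1 ee2.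
  move=> d; apply/idP/idP.
    rewrite -dvdn_divisors // => dmn; apply/allpairsP.
    exists (gcdn d m, gcdn d n); rewrite /= -!dvdn_divisors // !dvdn_gcdr; split => //.
    have cg : coprime (gcdn d m) (gcdn d n).
      apply: coprime_dvdl (dvdn_gcdr d m) _; exact: coprime_dvdr (dvdn_gcdr d n) cop.
    apply/eqP; rewrite eqn_dvd; apply/andP; split.
      rewrite muln_gcdl dvdn_gcd dvdn_mulr //= muln_gcdr dvdn_gcd dvdn_mull //.
    by rewrite Gauss_dvd // !dvdn_gcdl.
  move=> /allpairsP[[x1 x2] [/= h1 h2 ->]]; rewrite -dvdn_divisors //.
  rewrite -!dvdn_divisors // in h1 h2; exact: dvdn_mul.
rewrite /Dsum (perm_big _ pe) big_allpairs_dep big_distrl /=.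
apply: eq_big_seq => d1 h1; rewrite big_distrr /=; apply: eq_big_seq => d2 h2.
rewrite FM //; rewrite -!dvdn_divisors // in h1 h2.
apply: coprime_dvdl h1 _; exact: coprime_dvdr h2 cop.
Qed.

Lemma Dsum_pexp F p k : prime p ->
  Dsum F (p ^ k)%N = \big[Rplus/0]_(0 <= j < k.+1) F (p ^ j)%N.
Proof.
move=> pp; rewrite /Dsum /index_iota subn0 -(big_map (expn p) xpredT).
apply: perm_big; apply: uniq_perm; first exact: divisors_uniq.
  rewrite map_inj_uniq ?iota_uniq //; apply: expnI; exact: prime_gt1.
move=> d; rewrite -dvdn_divisors ?expn_gt0 ?prime_gt0 //.
apply/idP/idP.
  case/(dvdn_pfactor _ _ pp) => j jk ->; apply: map_f; rewrite mem_iota /=; lia.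
case/mapP => j; rewrite mem_iota => /andP[_ jk] ->; apply/(dvdn_pfactor _ _ pp).
by exists j.
Qed.

Definition fp (p a : nat) : R := INR (p ^ a) / beta_pp p a.
Definition gp (p a : nat) : R := fp p a - fp p a.-1.
Definition ff (n : nat) : R := INR n * / beta n.
Definition gg (n : nat) : R := mult gp n.

Lemma INR_pos_p p : prime p -> 2 <= INR p.
Proof. move=> pp; have := prime_gt1 pp; move/leP => h; apply: (le_INR 2); lia. Qed.

Lemma fp0 p : prime p -> fp p 0 = 1.
Proof.
move=> pp; have := INR_pos_p _ pp => h.
rewrite /fp /beta_pp /=; field; lra.
Qed.

Lemma beta1 : beta 1 = 1.
Proof. by rewrite beta_mult /mult /= big_nil. Qed.

Lemma ff_mult : multiplicative ff.
Proof.
split; first by rewrite /ff beta1 /=; field.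
move=> m n cop; rewrite /ff.
have [_ bM] := mult_multiplicative beta_pp.
rewrite !beta_mult bM // mult_INR Rinv_mult; ring.
Qed.

Lemma beta_pexp p k : prime p -> (0 < k)%N -> beta (p ^ k) = beta_pp p k.
Proof. by move=> pp k0; rewrite beta_mult mult_pexp. Qed.

Lemma ff_Dsum n : (0 < n)%N -> ff n = Dsum gg n.
Proof.
apply: mult_eq; [exact: ff_mult | apply: Dsum_mult; exact: mult_multiplicative |].
move=> p k pp k0; rewrite Dsum_pexp //.
rewrite /ff beta_pexp // -/(fp p k).
elim: k k0 => [//|k IH _].
rewrite big_nat_recr //=.
have [->|k0] := posnP k.
  rewrite big_nat1 /gg expn0 (mult_pexp gp p 1 pp) // /mult /= big_nil /gp /= fp0 //; rewrite /fp /Rdiv; ring.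
rewrite -IH // /gg mult_pexp // /gp /=; rewrite /fp /Rdiv; ring.
Qed.

Lemma ln_le_sub1 y : 0 < y -> ln y <= y - 1.
Proof. move=> y0; have := exp_ineq1_le (ln y); rewrite exp_ln //; lra. Qed.

Lemma ln_ge_1inv y : 0 < y -> 1 - / y <= ln y.
Proof.
move=> y0; have := ln_le_sub1 (/ y) (Rinv_0_lt_compat _ y0).
rewrite ln_Rinv //; lra.
Qed.

Lemma ln_le_mono x y : 0 < x -> x <= y -> ln x <= ln y.
Proof.
move=> x0 [xy|->]; last lra. left; apply: ln_increasing => //.
Qed.

Lemma Rpower_pos x y : 0 < Rpower x y.
Proof. rewrite /Rpower; exact: exp_pos. Qed.

Lemma ln_le_Rpower s y : 0 < s -> 0 < y -> ln y <= Rpower y s / s.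
Proof.
move=> s0 y0; have := ln_le_sub1 (Rpower y s) (Rpower_pos y s).
rewrite ln_Rpower => h.
apply: (Rmult_le_reg_l s) => //.
have -> : s * (Rpower y s / s) = Rpower y s by field; lra.
lra.
Qed.

Lemma Rabs_le_inv a b : Rabs a <= b -> - b <= a <= b.
Proof. move=> h; split; [have := Rle_abs (-a); rewrite Rabs_Ropp | have := Rle_abs a]; lra. Qed.

Lemma lim_le (u : nat -> R) l c N0 :
  Un_cv u l -> (forall n, (N0 <= n)%N -> u n <= c) -> l <= c.
Proof.
move=> cv h; apply: Rnot_lt_le => lc.
have [N hN] := cv (l - c) ltac:(lra).
have := hN (maxn N N0) ltac:(apply/leP; lia).
have := h (maxn N N0) ltac:(lia).
rewrite /R_dist => h1 h2; move: (Rle_abs (u (maxn N N0) - l)) (Rabs_minus_sym (u (maxn N N0)) l).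
have := Rabs_def2 _ _ h2; lra.
Qed.

Lemma lim_ge (u : nat -> R) l c N0 :
  Un_cv u l -> (forall n, (N0 <= n)%N -> c <= u n) -> c <= l.
Proof.
move=> cv h; apply: Ropp_le_cancel; apply: (lim_le (fun n => - u n) _ _ N0).
  by apply: CV_opp.
move=> n /h; lra.
Qed.

Lemma lim_abs_le (u : nat -> R) l a c N0 :
  Un_cv u l -> (forall n, (N0 <= n)%N -> Rabs (u n - a) <= c) -> Rabs (l - a) <= c.
Proof.
move=> cv h; apply: Rabs_le; split.
  have : - c + a <= l; last lra.
  apply: (lim_ge u _ _ N0) => // n /h /Rabs_le_inv; lra.
have : l <= c + a; last lra.
apply: (lim_le u _ _ N0) => // n /h /Rabs_le_inv; lra.
Qed.

Definition H (M : nat) : R := \rsum_(m <- iota 1 M) / INR m.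

Lemma H_S M : H M.+1 = H M + / INR M.+1.
Proof.
rewrite /H; have -> : iota 1 M.+1 = iota 1 M ++ [:: M.+1] by rewrite -[M.+1]addn1 iotaD /= add1n addn1.
rewrite big_cat big_cons big_nil; rewrite -[Monoid.Law.sort _]/Rplus Rplus_0_r //.
Qed.

Definition Useq (n : nat) : R := H n.+1 - ln (INR n.+1).
Definition Vseq (n : nat) : R := H n.+1 - ln (INR n.+2).

Lemma INR_S_pos n : 0 < INR n.+1.
Proof. apply: lt_0_INR; lia. Qed.

Lemma Useq_dec n : Useq n.+1 <= Useq n.
Proof.
rewrite /Useq H_S.
have h1 := INR_S_pos n; have h2 := INR_S_pos n.+1.
have e : ln (INR n.+2) = ln (INR n.+1) + ln (INR n.+2 / INR n.+1).
  rewrite -ln_mult //; last by apply: Rdiv_lt_0_compat.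
  by congr ln; field; lra.
rewrite e; have := ln_ge_1inv (INR n.+2 / INR n.+1) (Rdiv_lt_0_compat _ _ h2 h1).
have -> : 1 - / (INR n.+2 / INR n.+1) = / INR n.+2.
  rewrite (S_INR n.+1); field; rewrite -S_INR; lra.
lra.
Qed.

Lemma Vseq_inc n : Vseq n <= Vseq n.+1.
Proof.
rewrite /Vseq (H_S n.+1).
have h1 := INR_S_pos n.+1; have h2 := INR_S_pos n.+2.
have e : ln (INR n.+3) = ln (INR n.+2) + ln (INR n.+3 / INR n.+2).
  rewrite -ln_mult //; last by apply: Rdiv_lt_0_compat.
  by congr ln; field; lra.
rewrite e; have := ln_le_sub1 (INR n.+3 / INR n.+2) (Rdiv_lt_0_compat _ _ h2 h1).
have -> : INR n.+3 / INR n.+2 - 1 = / INR n.+2.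
  rewrite (S_INR n.+2); field; lra.
lra.
Qed.

Lemma UV n : Vseq n <= Useq n.
Proof.
rewrite /Vseq /Useq; have := ln_le_mono (INR n.+1) (INR n.+2) (INR_S_pos n).
have : INR n.+1 <= INR n.+2 by apply: le_INR; lia.
move=> h1 h2; have := h2 h1; lra.
Qed.

Lemma Useq_le m n : (m <= n)%N -> Useq n <= Useq m.
Proof.
move=> /subnK <-; elim: (n - m)%N => [|k IH]; first by rewrite add0n; lra.
rewrite addSn; have := Useq_dec (k + m); lra.
Qed.

Lemma Vseq_le m n : (m <= n)%N -> Vseq m <= Vseq n.
Proof.
move=> /subnK <-; elim: (n - m)%N => [|k IH]; first by rewrite add0n; lra.
rewrite addSn; have := Vseq_inc (k + m); lra.
Qed.

Lemma gamma_ex : {g : R | forall M, (0 < M)%N -> Rabs (H M - ln (INR M) - g) <= / INR M}.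
Proof.
have [g cv] : {l | Un_cv Vseq l}.
  apply: growing_cv; first exact: Vseq_inc.
  exists (Useq 0) => x [i ->]; have := UV i; have := Useq_le 0 i isT; lra.
exists g => M M0.
have hV : Vseq M.-1 <= g.
  apply: (lim_ge _ _ _ M.-1 cv) => n; exact: Vseq_le.
have hU : g <= Useq M.-1.
  apply: (lim_le _ _ _ 0 cv) => n _.
  case: (leqP n M.-1) => h.
    have := Vseq_le _ _ h; have := UV M.-1; lra.
  have := UV n; have := Useq_le M.-1 n (ltnW h); lra.
move: hV hU; rewrite /Vseq /Useq prednK // => hV hU.
have hM : 0 < INR M by apply: lt_0_INR; lia.
have := ln_le_sub1 (INR M.+1 / INR M) (Rdiv_lt_0_compat _ _ (INR_S_pos M) hM).
have -> : INR M.+1 / INR M - 1 = / INR M by rewrite S_INR; field; lra.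
rewrite /Rdiv ln_mult ?ln_Rinv //; last by apply: Rinv_0_lt_compat.
  2: exact: INR_S_pos.
move=> h; apply: Rabs_le; lra.
Qed.

Lemma sum_inv_betaE N : sum_inv_beta N = \rsum_(n <- iota 1 N) / beta n.
Proof. by rewrite /sum_inv_beta unlock. Qed.

Lemma divisors_filter n : (0 < n)%N ->
  perm_eq (divisors n) [seq d <- iota 1 n | d %| n].
Proof.
move=> n0; apply: uniq_perm; [exact: divisors_uniq| by rewrite filter_uniq ?iota_uniq |].
move=> d; rewrite mem_filter mem_iota -dvdn_divisors //.
apply/idP/idP => [dn|/andP[] //]; rewrite dn /=.
have := dvdn_leq n0 dn; case: d dn => [|d]; last (move=> _ /=; lia).
by rewrite dvd0n => /eqP h; rewrite h in n0.
Qed.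

Lemma inv_beta_ff n : (0 < n)%N -> / beta n = ff n / INR n.
Proof.
move=> n0; have h : 0 < INR n by apply: lt_0_INR; lia.
rewrite /ff /Rdiv Rmult_comm -Rmult_assoc Rinv_l ?Rmult_1_l //; lra.
Qed.

Definition Xsum (N : nat) : R := \rsum_(d <- iota 1 N) (gg d / INR d) * H (N %/ d).

Lemma exchange N : sum_inv_beta N = Xsum N.
Proof.
rewrite sum_inv_betaE; elim: N => [|N IH]; first by rewrite /Xsum /= !big_nil.
have -> : iota 1 N.+1 = iota 1 N ++ [:: N.+1] by rewrite -[N.+1]addn1 iotaD /= add1n addn1.
rewrite big_cat big_cons big_nil -[Monoid.Law.sort _]/Rplus Rplus_0_r IH.
rewrite inv_beta_ff // ff_Dsum // /Dsum (perm_big _ (divisors_filter _ _)) //.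
rewrite big_filter big_mkcond /Xsum.
have -> : iota 1 N.+1 = iota 1 N ++ [:: N.+1] by rewrite -[N.+1]addn1 iotaD /= add1n addn1.
rewrite !big_cat !big_cons !big_nil -![Monoid.Law.sort _]/Rplus !Rplus_0_r.
rewrite divnn ltn0Sn dvdnn.
have hN : 0 < INR N.+1 by apply: lt_0_INR; lia.
rewrite (_ : H 1 = 1); last by rewrite /H /= big_cons big_nil -[Monoid.Law.sort _]/Rplus Rinv_1; ring.
have e : forall d, (d \in iota 1 N) ->
   gg d / INR d * H (N.+1 %/ d) =
   gg d / INR d * H (N %/ d) + (if d %| N.+1 then gg d else 0) / INR N.+1.
  move=> d; rewrite mem_iota => /andP[d1 _].
  rewrite divnS //; case: ifP => dd; last by rewrite add0n /Rdiv Rmult_0_l; ring.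
  rewrite add1n H_S.
  have hd : 0 < INR d by apply: lt_0_INR; lia.
  have -> : INR (N %/ d).+1 = INR N.+1 / INR d.
    have -> : (N %/ d).+1 = (N.+1 %/ d)%N by rewrite divnS // dd.
    rewrite -{2}(divnK dd) mult_INR; field; lra.
  field; lra.
rewrite (eq_big_seq _ e) big_split -[Monoid.Law.sort _]/Rplus.
have -> : \rsum_(i <- iota 1 N) ((if i %| N.+1 then gg i else 0) / INR N.+1) =
   (\rsum_(i <- iota 1 N) (if i %| N.+1 then gg i else 0)) / INR N.+1.
  by rewrite /Rdiv big_distrl.
rewrite -?[Monoid.ComLaw.sort _]/Rplus /Rdiv Rmult_plus_distr_r Rmult_1_r Rplus_assoc; reflexivity.
Qed.

Lemma INR_expn p a : INR (p ^ a)%N = INR p ^ a.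
Proof. elim: a => [|a IH]; first by rewrite expn0. by rewrite expnS mult_INR IH. Qed.

Lemma neg1pow a : (-1) ^ a = 1 \/ (-1) ^ a = -1.
Proof. elim: a => [|a [IH|IH]] /=; [left | right | left]; rewrite ?IH; lra. Qed.

Lemma beta_ppE p a : beta_pp p a = (INR p ^ a.+1 + (-1) ^ a) / (INR p + 1).
Proof. by rewrite /beta_pp addn1. Qed.

Lemma pow_ge_base x a : 1 <= x -> (0 < a)%N -> x <= x ^ a.
Proof.
move=> x1; case: a => // a _; elim: a => [|a IH]; first by rewrite /=; lra.
rewrite /= in IH *; have : 1 <= x * x ^ a.
  have := pow_le x a ltac:(lra); nra.
nra.
Qed.

Lemma pow_ge1 x a : 1 <= x -> 1 <= x ^ a.
Proof. move=> x1; elim: a => [|a IH] /=; nra. Qed.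

Lemma div_nonneg a b : 0 <= a -> 0 < b -> 0 <= a / b.
Proof. move=> ha hb; apply: Rmult_le_pos => //; left; exact: Rinv_0_lt_compat. Qed.

Lemma fp_close p a : prime p ->
  Rabs (fp p a - (INR p + 1) / INR p) <= 3 / INR p ^ a.+1.
Proof.
move=> pp; have P2 := INR_pos_p _ pp.
move: P2; set P := INR p => P2.
have Q1 : P <= P ^ a.+1 by apply: pow_ge_base => //; lra.
have Qe : P ^ a.+1 = P * P ^ a by [].
have Pa : 1 <= P ^ a by apply: pow_ge1; lra.
rewrite /fp beta_ppE INR_expn -/P.
case: (neg1pow a) => ->.
  have -> : P ^ a / ((P ^ a.+1 + 1) / (P + 1)) - (P + 1) / P = - ((P + 1) / (P * (P ^ a.+1 + 1))).
    rewrite Qe; field; nra.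
  rewrite Rabs_Ropp Rabs_right; last by apply: Rle_ge; apply: div_nonneg; nra.
  apply: (Rmult_le_reg_r (P * (P ^ a.+1 + 1) * P ^ a.+1)); first nra.
  have -> : (P + 1) / (P * (P ^ a.+1 + 1)) * (P * (P ^ a.+1 + 1) * P ^ a.+1) = (P + 1) * P ^ a.+1.
    field; nra.
  have -> : 3 / P ^ a.+1 * (P * (P ^ a.+1 + 1) * P ^ a.+1) = 3 * (P * (P ^ a.+1 + 1)).
    field; nra.
  nra.
have -> : P ^ a / ((P ^ a.+1 + -1) / (P + 1)) - (P + 1) / P = ((P + 1) / (P * (P ^ a.+1 - 1))).
  rewrite Qe; field; split; nra.
rewrite Rabs_right; last by apply: Rle_ge; apply: div_nonneg; nra.
apply: (Rmult_le_reg_r (P * (P ^ a.+1 - 1) * P ^ a.+1)); first nra.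
have -> : (P + 1) / (P * (P ^ a.+1 - 1)) * (P * (P ^ a.+1 - 1) * P ^ a.+1) = (P + 1) * P ^ a.+1.
  field; nra.
have -> : 3 / P ^ a.+1 * (P * (P ^ a.+1 - 1) * P ^ a.+1) = 3 * (P * (P ^ a.+1 - 1)).
  field; nra.
nra.
Qed.

Lemma beta_pp_pos p a : prime p -> 0 < beta_pp p a.
Proof.
move=> pp; have P2 := INR_pos_p _ pp; rewrite beta_ppE.
have : 2 <= INR p ^ a.+1.
  have := pow_ge_base (INR p) a.+1 ltac:(lra) isT; lra.
case: (neg1pow a) => ->; move=> h; apply: Rdiv_lt_0_compat; lra.
Qed.

Lemma fp_pos p a : prime p -> 0 < fp p a.
Proof.
move=> pp; rewrite /fp INR_expn; apply: Rdiv_lt_0_compat; last exact: beta_pp_pos.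
apply: pow_lt; have := INR_pos_p _ pp; lra.
Qed.

Lemma fp_le3 p a : prime p -> fp p a <= 3.
Proof.
move=> pp; have P2 := INR_pos_p _ pp; have := fp_close _ a pp.
move/Rabs_le_inv => [_ h].
have : 3 / INR p ^ a.+1 <= 3 / 2.
  have := pow_ge_base (INR p) a.+1 ltac:(lra) isT => h2.
  apply: Rmult_le_compat_l; first lra.
  apply: Rinv_le_contravar; lra.
have : (INR p + 1) / INR p <= 3 / 2.
  apply: (Rmult_le_reg_r (INR p)); first lra.
  rewrite /Rdiv Rmult_assoc Rinv_l; lra.
lra.
Qed.

Lemma inv_pow_le x a b : 1 <= x -> (a <= b)%N -> / x ^ b <= / x ^ a.
Proof.
move=> x1 ab; apply: Rinv_le_contravar; first by have := pow_ge1 x a x1; lra.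
rewrite -(subnK ab) pow_add; have := pow_ge1 x (b - a) x1; have := pow_ge1 x a x1; nra.
Qed.

Lemma gp_bound p a : prime p -> (0 < a)%N -> Rabs (gp p a) <= 6 / INR p ^ a.
Proof.
move=> pp a0; have P2 := INR_pos_p _ pp.
have h1 := fp_close _ a pp; have h2 := fp_close _ a.-1 pp.
rewrite prednK // in h2.
have h3 : 3 / INR p ^ a.+1 <= 3 / INR p ^ a.
  apply: Rmult_le_compat_l; first lra. apply: inv_pow_le => //; lra.
rewrite /gp (_ : fp p a - fp p a.-1 =
  (fp p a - (INR p + 1) / INR p) - (fp p a.-1 - (INR p + 1) / INR p)); last ring.
apply: Rle_trans; first exact: Rabs_triang.
rewrite Rabs_Ropp; lra.
Qed.

Ltac nb := rewrite -?[@Monoid.Law.sort _ 0 _]/Rplus -?[@Monoid.Law.sort _ 1 _]/Rmult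
  -?[@Monoid.ComLaw.sort _ 0 _]/Rplus -?[@Monoid.ComLaw.sort _ 1 _]/Rmult.

Lemma sum_le (s : seq nat) F G : (forall i, i \in s -> F i <= G i) ->
  \rsum_(i <- s) F i <= \rsum_(i <- s) G i.
Proof.
elim: s => [|x s IH] h; first by rewrite !big_nil; lra.
rewrite !big_cons; nb; apply: Rplus_le_compat; first by apply: h; rewrite mem_head.
by apply: IH => i hi; apply: h; rewrite in_cons hi orbT.
Qed.

Lemma sum_nonneg (s : seq nat) F : (forall i, i \in s -> 0 <= F i) ->
  0 <= \rsum_(i <- s) F i.
Proof.
move=> h; have := sum_le s (fun _ => 0) F h; rewrite big1_eq //.
Qed.

Lemma prod_le (s : seq nat) F G : (forall i, i \in s -> 0 <= F i <= G i) ->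
  \rprod_(i <- s) F i <= \rprod_(i <- s) G i.
Proof.
suff : (forall i, i \in s -> 0 <= F i <= G i) ->
  0 <= \rprod_(i <- s) F i <= \rprod_(i <- s) G i by move=> h /h [].
elim: s => [|x s IH] h; first by rewrite !big_nil; lra.
rewrite !big_cons; nb.
have [h1 h2] := h x (mem_head _ _).
have [h3 h4] := IH (fun i hi => h i ltac:(by rewrite in_cons hi orbT)).
split; [exact: Rmult_le_pos | apply: Rmult_le_compat => //].
Qed.

Lemma exp_sum (s : seq nat) F : exp (\rsum_(i <- s) F i) = \rprod_(i <- s) exp (F i).
Proof.
elim: s => [|x s IH]; first by rewrite !big_nil exp_0.
by rewrite !big_cons; nb; rewrite exp_plus IH.
Qed.

Lemma sum_sub_le (s t : seq nat) F : uniq s -> uniq t -> {subset s <= t} ->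
  (forall i, i \in t -> 0 <= F i) -> \rsum_(i <- s) F i <= \rsum_(i <- t) F i.
Proof.
move=> us ut st h.
have pe : perm_eq t ([seq i <- t | i \in s] ++ [seq i <- t | i \notin s]).
  by rewrite perm_sym perm_filterC.
have pe2 : perm_eq s [seq i <- t | i \in s].
  apply: uniq_perm => //; first by rewrite filter_uniq.
  by move=> i; rewrite mem_filter; apply/idP/idP => [hi|/andP[] //]; rewrite hi st.
rewrite (perm_big _ pe) big_cat (perm_big _ pe2); nb.
have : 0 <= \rsum_(i <- [seq i <- t | i \notin s]) F i.
  apply: sum_nonneg => i; rewrite mem_filter => /andP[_]; exact: h.
lra.
Qed.

Lemma Rpower_1base s : Rpower 1 s = 1.
Proof. by rewrite /Rpower ln_1 Rmult_0_r exp_0. Qed.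

Lemma Rpower_pow_base x j s : 0 < x -> Rpower (x ^ j) s = Rpower x s ^ j.
Proof.
move=> x0; elim: j => [|j IH] /=; first exact: Rpower_1base.
by rewrite -Rpower_mult_distr ?IH //; apply: pow_lt.
Qed.

Definition Rp (s : R) (d : nat) : R := Rpower (INR d) s.
Definition Es (s : R) (d : nat) : R := Rabs (gg d) * Rp (- s) d.

Lemma mult_mul F G : multiplicative F -> multiplicative G ->
  multiplicative (fun d => F d * G d).
Proof.
move=> [F1 FM] [G1 GM]; split; first by rewrite F1 G1; ring.
by move=> m n c; rewrite FM // GM //; ring.
Qed.

Lemma mult_abs F : multiplicative F -> multiplicative (fun d => Rabs (F d)).
Proof.
move=> [F1 FM]; split; first by rewrite F1 Rabs_R1.
by move=> m n c; rewrite FM // Rabs_mult.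
Qed.

Lemma Rp_mult s : multiplicative (Rp s).
Proof.
split; first by rewrite /Rp /= Rpower_1base.
move=> m n c; rewrite /Rp mult_INR.
have [m0|m0] := posnP m.
  rewrite m0 in c *; move: c; rewrite /coprime; move/eqP; rewrite gcd0n => ->; by rewrite /= Rmult_1_r Rpower_1base Rmult_1_r.
have [n0|n0] := posnP n.
  rewrite n0 in c *; move: c; rewrite /coprime; move/eqP; rewrite gcdn0 => ->; by rewrite /= Rmult_1_l Rpower_1base Rmult_1_l.
rewrite Rpower_mult_distr //; apply: lt_0_INR; lia.
Qed.

Lemma Es_mult s : multiplicative (Es s).
Proof.
apply: mult_mul; last exact: Rp_mult.
apply: mult_abs; exact: mult_multiplicative.
Qed.

Lemma Es_nonneg s d : 0 <= Es s d.
Proof. apply: Rmult_le_pos; [exact: Rabs_pos | left; exact: Rpower_pos]. Qed.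

Lemma geom_bound q k : 0 <= q <= 1/2 ->
  \big[Rplus/0]_(1 <= j < k.+1) q ^ j <= 2 * q - 2 * q ^ k.+1.
Proof.
move=> hq; elim: k => [|k IH]; first by rewrite big_geq //=; lra.
rewrite big_nat_recr //=; nb.
have h1 : 0 <= q ^ k by apply: pow_le; lra.
have h2 : 0 <= q * q ^ k * (1 - 2 * q) by apply: Rmult_le_pos; [apply: Rmult_le_pos; lra | lra].
rewrite /= in IH *; nra.
Qed.

Lemma local_bound s p k : 0 < s -> prime p ->
  Dsum (Es s) (p ^ k)%N <= 1 + 12 * Rpower (INR p) (-1 - s).
Proof.
move=> s0 pp; have P2 := INR_pos_p _ pp.
rewrite Dsum_pexp // big_ltn //; nb.
have -> : Es s (p ^ 0)%N = 1 by rewrite expn0 /Es /gg /mult /= big_nil Rabs_R1 /Rp Rpower_1base; ring.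
set q := Rpower (INR p) (-1 - s).
have hq : 0 <= q <= 1 / 2.
  split; first by left; exact: Rpower_pos.
  have : q <= Rpower (INR p) (-1) by apply: Rle_Rpower; lra.
  rewrite Rpower_Ropp Rpower_1; last lra.
  move=> h; apply: Rle_trans h _; have := Rinv_le_contravar 2 (INR p) ltac:(lra) P2; lra.
have : \big[Rplus/0]_(1 <= j < k.+1) Es s (p ^ j)%N <= \big[Rplus/0]_(1 <= j < k.+1) (6 * q ^ j).
  apply: sum_le => j; rewrite mem_index_iota => /andP[j1 _].
  rewrite /Es /gg mult_pexp // /Rp INR_expn Rpower_pow_base; last lra.
  have hg := gp_bound _ _ pp j1.
  have -> : q ^ j = (/ INR p) ^ j * Rpower (INR p) (- s) ^ j.
    rewrite -Rpow_mult_distr; congr (_ ^ j).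
    rewrite /q (_ : -1 - s = -(1) + - s); last ring.
    rewrite Rpower_plus Rpower_Ropp Rpower_1 //; lra.
  have hr : 0 <= Rpower (INR p) (- s) ^ j by apply: pow_le; left; exact: Rpower_pos.
  rewrite -Rmult_assoc; apply: Rmult_le_compat_r => //.
  by rewrite pow_inv; move: hg; rewrite /Rdiv.
have -> : \big[Rplus/0]_(1 <= j < k.+1) (6 * q ^ j) = 6 * \big[Rplus/0]_(1 <= j < k.+1) q ^ j.
  by rewrite big_distrr.
have := geom_bound _ k hq; have : 0 <= q ^ k.+1 by apply: pow_le; lra.
lra.
Qed.

Lemma exp_le_mono x y : x <= y -> exp x <= exp y.
Proof. move=> [h|->]; [left; exact: exp_increasing | lra]. Qed.

Lemma tele_step s y : 0 < s -> 1 <= y ->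
  Rpower (y + 1) (-1 - s) <= (Rpower y (- s) - Rpower (y + 1) (- s)) / s.
Proof.
move=> s0 y1; rewrite /Rpower.
set A := exp (- s * ln (y + 1)).
have A0 : 0 < A by exact: exp_pos.
have e1 : exp ((-1 - s) * ln (y + 1)) = A / (y + 1).
  rewrite /A /Rdiv -(exp_ln (y + 1)) ?exp_Ropp -?exp_plus; last lra.
  rewrite ln_exp -exp_Ropp -exp_plus; congr exp; ring.
have hl : 1 / (y + 1) <= ln (y + 1) - ln y.
  have := ln_ge_1inv ((y + 1) / y) ltac:(apply: Rdiv_lt_0_compat; lra).
  rewrite /Rdiv ln_mult ?ln_Rinv; try lra; last by apply: Rinv_0_lt_compat; lra.
  have -> : / ((y + 1) * / y) = y / (y + 1) by field; lra.
  have -> : 1 - y / (y + 1) = 1 / (y + 1) by field; lra.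
  lra.
have e2 : exp (- s * ln y) = A * exp (s * (ln (y + 1) - ln y)).
  rewrite /A -exp_plus; congr exp; ring.
have := exp_ineq1_le (s * (ln (y + 1) - ln y)).
rewrite e1 e2 => h.
have h2 : A * (s * (1 / (y + 1))) <= A * (s * (ln (y + 1) - ln y)).
  apply: Rmult_le_compat_l; first lra. apply: Rmult_le_compat_l; lra.
apply: (Rmult_le_reg_r s) => //.
have -> : (A * exp (s * (ln (y + 1) - ln y)) - A) / s * s = A * exp (s * (ln (y + 1) - ln y)) - A.
  field; lra.
have -> : A / (y + 1) * s = A * (s * (1 / (y + 1))) by field; lra.
nra.
Qed.

Lemma tele s M : 0 < s ->
  \rsum_(n <- iota 2 M) Rpower (INR n) (-1 - s) <= (1 - Rpower (INR M.+1) (- s)) / s.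
Proof.
move=> s0; elim: M => [|M IH].
  rewrite big_nil /= Rpower_1base; lra.
have -> : iota 2 M.+1 = iota 2 M ++ [:: M.+2] by rewrite -[M.+1]addn1 iotaD /= addn1.
rewrite big_cat big_cons big_nil; nb; rewrite Rplus_0_r.
have := tele_step s (INR M.+1) s0 ltac:(apply: (le_INR 1); lia).
rewrite -S_INR => h.
have : (1 - Rpower (INR M.+1) (- s)) / s + (Rpower (INR M.+1) (- s) - Rpower (INR M.+2) (- s)) / s
   = (1 - Rpower (INR M.+2) (- s)) / s by field; lra.
lra.
Qed.

Definition Bs (s : R) : R := exp (12 / s).

Lemma Dsum_Es_bound s L : 0 < s -> (0 < L)%N -> Dsum (Es s) L <= Bs s.
Proof.
move=> s0 L0.
have DM : multiplicative (Dsum (Es s)) by apply: Dsum_mult; exact: Es_mult.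
rewrite (mult_decomp _ _ DM L0).
apply: Rle_trans.
  apply: (prod_le _ _ (fun p => exp (12 * Rpower (INR p) (-1 - s)))).
  move=> p; rewrite mem_primes => /andP[pp _]; split.
    apply: sum_nonneg => d _; exact: Es_nonneg.
  apply: Rle_trans; first exact: local_bound.
  exact: exp_ineq1_le.
rewrite -exp_sum /Bs; apply: exp_le_mono.
rewrite -big_distrr /=.
apply: (Rle_trans _ (12 * \rsum_(n <- iota 2 L) Rpower (INR n) (-1 - s))).
  apply: Rmult_le_compat_l; first lra.
  apply: sum_sub_le; [exact: primes_uniq | exact: iota_uniq | |].
    move=> p; rewrite mem_primes mem_iota => /and3P[pp _ pL].
    have := prime_gt1 pp; have := dvdn_leq L0 pL; lia.
  move=> i _; left; exact: Rpower_pos.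
have := tele s L s0; have := Rpower_pos (INR L.+1) (- s).
have : 0 < / s by apply: Rinv_0_lt_compat.
rewrite /Rdiv => h1 h2 h3.
have : 12 * ((1 - Rpower (INR L.+1) (- s)) * / s) <= 12 * / s by nra.
lra.
Qed.

Lemma partial_Es_bound s N : 0 < s -> \rsum_(d <- iota 1 N) Es s d <= Bs s.
Proof.
move=> s0; apply: Rle_trans (Dsum_Es_bound s (N`!) s0 (fact_gt0 N)).
rewrite /Dsum; apply: sum_sub_le; [exact: iota_uniq | exact: divisors_uniq | |].
  move=> d; rewrite mem_iota -dvdn_divisors ?fact_gt0 // => h; apply: dvdn_fact; lia.
move=> i _; exact: Es_nonneg.
Qed.

Lemma sum_abs (s : seq nat) F : Rabs (\rsum_(i <- s) F i) <= \rsum_(i <- s) Rabs (F i).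
Proof.
elim: s => [|x s IH]; first by rewrite !big_nil Rabs_R0; lra.
rewrite !big_cons; nb; apply: Rle_trans; first exact: Rabs_triang.
lra.
Qed.

Lemma Rpower_neg_anti k x y : 0 <= k -> 0 < x -> x <= y -> Rpower y (- k) <= Rpower x (- k).
Proof.
move=> k0 x0 xy; rewrite !Rpower_Ropp; apply: Rinv_le_contravar; first exact: Rpower_pos.
apply: Rle_Rpower_l => //; lra.
Qed.

Lemma Rpower_small k d : 0 < k -> 0 < d ->
  exists N, forall n, (N <= n)%N -> Rpower (INR n.+1) (- k) < d.
Proof.
move=> k0 d0; have [N hN] := INR_unbounded (Rpower d (- / k)).
exists N => n nN.
have hy : Rpower d (- / k) < INR n.+1.
  apply: Rlt_le_trans hN _; apply: le_INR; lia.
have := Rpower_pos d (- / k) => hp.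
rewrite /Rpower; rewrite /Rpower in hy hp.
have : ln (exp (- / k * ln d)) < ln (INR n.+1) by apply: ln_increasing.
rewrite ln_exp => h.
rewrite -(exp_ln d) //; apply: exp_increasing.
have : - k * ln (INR n.+1) < - k * (- / k * ln d) by apply: Rmult_lt_gt_compat_neg_l; lra.
have -> : - k * (- / k * ln d) = ln d by field; lra.
done.
Qed.

Lemma tail_lemma (t E : nat -> R) B c k :
  0 < k -> 0 <= c -> (forall d, 0 <= E d) ->
  (forall N, \rsum_(d <- iota 1 N) E d <= B) ->
  (forall d, (0 < d)%N -> Rabs (t d) <= c * E d * Rpower (INR d) (- k)) ->
  {l | Un_cv (fun N => \rsum_(d <- iota 1 N) t d) l /\
       forall N y, 0 < y -> y <= INR N.+1 ->
         Rabs (l - \rsum_(d <- iota 1 N) t d) <= c * B * Rpower y (- k)}.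
Proof.
move=> k0 c0 E0 EB tb.
have B0 : 0 <= B by have := EB 0%N; rewrite big_nil.
have step : forall N M, (N <= M)%N ->
    Rabs (\rsum_(d <- iota 1 M) t d - \rsum_(d <- iota 1 N) t d) <= c * B * Rpower (INR N.+1) (- k).
  move=> N M NM.
  have sp : iota 1 M = iota 1 N ++ iota N.+1 (M - N) by rewrite -{1}(subnKC NM) iotaD add1n.
  rewrite sp big_cat; nb.
  have -> : forall a b, a + b - a = b by move=> a b; ring.
  apply: Rle_trans; first exact: sum_abs.
  apply: Rle_trans.
    apply: (sum_le _ _ (fun d => c * E d * Rpower (INR N.+1) (- k))) => d.
    rewrite mem_iota => /andP[d1 _]; apply: Rle_trans; first by apply: tb; lia.
    apply: Rmult_le_compat_l; first by apply: Rmult_le_pos.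
    apply: Rpower_neg_anti; [lra | apply: lt_0_INR; lia | apply: le_INR; lia].
  rewrite -big_distrl -big_distrr.
  have hr := Rpower_pos (INR N.+1) (- k).
  apply: Rmult_le_compat_r; first lra. apply: Rmult_le_compat_l => //.
  apply: Rle_trans (EB M); rewrite sp big_cat; nb.
  have : 0 <= \rsum_(d <- iota 1 N) E d by apply: sum_nonneg.
  lra.
have cauchy : Cauchy_crit (fun N => \rsum_(d <- iota 1 N) t d).
  move=> eps e0.
  have [N hN] := Rpower_small k (eps / (c * B + 1)) k0 ltac:(apply: Rdiv_lt_0_compat; nra).
  exists N => n m nN mN; rewrite /R_dist.
  have key : forall a b, (N <= a)%N -> (a <= b)%N ->
      Rabs (\rsum_(d <- iota 1 b) t d - \rsum_(d <- iota 1 a) t d) < eps.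
    move=> a b aN ab; apply: Rle_lt_trans; first exact: step.
    have := hN a aN => h.
    have hcb : 0 <= c * B by apply: Rmult_le_pos.
    apply: Rle_lt_trans (_ : c * B * (eps / (c * B + 1)) < eps).
      apply: Rmult_le_compat_l => //; lra.
    apply: (Rmult_lt_reg_r (c * B + 1)); first lra.
    have -> : c * B * (eps / (c * B + 1)) * (c * B + 1) = c * B * eps by field; lra.
    nra.
  have nN' : (N <= n)%N by apply/leP.
  have mN' : (N <= m)%N by apply/leP.
  case: (leqP n m) => h.
    rewrite Rabs_minus_sym; exact: (key n m nN' h).
  exact: (key m n mN' (ltnW h)).
have [l cv] := R_complete _ cauchy.
exists l; split => // N y y0 yN.
apply: (lim_abs_le _ _ _ _ N cv) => M NM.
apply: Rle_trans; first exact: step.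
apply: Rmult_le_compat_l; first by apply: Rmult_le_pos.
apply: Rpower_neg_anti => //; lra.
Qed.

Lemma pointwise (g : R) x N d :
  (forall M, (0 < M)%N -> Rabs (H M - ln (INR M) - g) <= / INR M) ->
  INR N <= x < INR N + 1 -> (0 < d)%N -> (d <= N)%N ->
  Rabs (H (N %/ d) - (ln x - ln (INR d) + g)) <= 4 * INR d / x.
Proof.
move=> hg [xl xu] d0 dN.
set M := (N %/ d)%N.
have M0 : (0 < M)%N by rewrite /M divn_gt0.
have hM : 1 <= INR M by apply: (le_INR 1); lia.
have hd : 1 <= INR d by apply: (le_INR 1); lia.
have x1 : 1 <= x by apply: Rle_trans xl; apply: (le_INR 1); lia.
have h1 : INR M * INR d <= x.
  rewrite -mult_INR; apply: Rle_trans xl; apply: le_INR; apply/leP; exact: leq_divM.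
have h2 : x < (INR M + 1) * INR d.
  apply: Rlt_le_trans xu _; rewrite -!S_INR -mult_INR; apply: le_INR.
  have := ltn_ceil N d0; rewrite -/M; lia.
have ex : ln x - ln (INR d) = ln (x / INR d).
  rewrite /Rdiv ln_mult; [rewrite ln_Rinv; lra | lra | apply: Rinv_0_lt_compat; lra].
have q1 : INR M <= x / INR d.
  apply: (Rmult_le_reg_r (INR d)); first lra. rewrite /Rdiv Rmult_assoc Rinv_l; lra.
have q2 : x / INR d <= INR M + 1.
  apply: (Rmult_le_reg_r (INR d)); first lra. rewrite /Rdiv Rmult_assoc Rinv_l; lra.
have l1 : ln (INR M) <= ln (x / INR d) by apply: ln_le_mono; lra.
have l2 : ln (x / INR d) <= ln (INR M + 1) by apply: ln_le_mono; lra.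
have l3 : ln (INR M + 1) - ln (INR M) <= / INR M.
  have := ln_le_sub1 ((INR M + 1) / INR M) ltac:(apply: Rdiv_lt_0_compat; lra).
  rewrite /Rdiv ln_mult ?ln_Rinv; try lra; last by apply: Rinv_0_lt_compat; lra.
  have -> : (INR M + 1) * / INR M - 1 = / INR M by field; lra.
  lra.
have l4 : / INR M <= 2 * INR d / x.
  apply: (Rmult_le_reg_r (INR M * x)); first nra.
  have -> : / INR M * (INR M * x) = x by field; lra.
  have -> : 2 * INR d / x * (INR M * x) = 2 * INR M * INR d by field; lra.
  nra.
have := hg M M0; rewrite ex => /Rabs_le_inv h.
apply: Rabs_le; lra.
Qed.

Lemma sum_sub (s : seq nat) F G :
  \rsum_(i <- s) (F i - G i) = \rsum_(i <- s) F i - \rsum_(i <- s) G i.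
Proof.
elim: s => [|x s IH]; first by rewrite !big_nil; ring.
by rewrite !big_cons; nb; rewrite IH; ring.
Qed.

Lemma sum_scale (s : seq nat) a F :
  \rsum_(i <- s) (a * F i) = a * \rsum_(i <- s) F i.
Proof. by rewrite big_distrr. Qed.

Definition Tsum (N : nat) : R := \rsum_(d <- iota 1 N) (gg d / INR d).
Definition Lsum (N : nat) : R := \rsum_(d <- iota 1 N) (gg d * ln (INR d) / INR d).

Lemma Es_abs s d : (0 < d)%N -> Rabs (gg d) = Es s d * Rpower (INR d) s.
Proof.
move=> d0; rewrite /Es /Rp Rmult_assoc -Rpower_plus Rplus_opp_l Rpower_O; first ring.
apply: lt_0_INR; lia.
Qed.

Lemma T_tail s : 0 < s -> s < 1 ->
  {l | Un_cv Tsum l /\ forall N y, 0 < y -> y <= INR N.+1 ->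
     Rabs (l - Tsum N) <= 1 * Bs s * Rpower y (- (1 - s))}.
Proof.
move=> s0 s1; apply: (tail_lemma _ (Es s)); [lra | lra | exact: Es_nonneg | |].
  move=> N; exact: partial_Es_bound.
move=> d d0; have hd : 0 < INR d by apply: lt_0_INR; lia.
rewrite /Rdiv Rabs_mult (Es_abs s) // Rabs_Rinv; last lra.
rewrite Rabs_right; last lra.
have e : Rpower (INR d) (- (1 - s)) = Rpower (INR d) s * / INR d.
  rewrite (_ : - (1 - s) = s + - (1)); last ring.
  rewrite Rpower_plus Rpower_Ropp Rpower_1 //.
rewrite e; right; ring.
Qed.

Lemma L_tail s : 0 < s -> s < 1/2 ->
  {l | Un_cv Lsum l /\ forall N y, 0 < y -> y <= INR N.+1 ->
     Rabs (l - Lsum N) <= / s * Bs s * Rpower y (- (1 - 2 * s))}.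
Proof.
move=> s0 s1; apply: (tail_lemma _ (Es s)); [lra | left; exact: Rinv_0_lt_compat | exact: Es_nonneg | |].
  move=> N; exact: partial_Es_bound.
move=> d d0; have hd : 1 <= INR d by apply: (le_INR 1); lia.
have lnd : 0 <= ln (INR d) by rewrite -ln_1; apply: ln_le_mono; lra.
have lnb := ln_le_Rpower s (INR d) s0 ltac:(lra).
rewrite /Rdiv !Rabs_mult (Es_abs s) // Rabs_Rinv; last lra.
rewrite (Rabs_right (INR d)); last lra.
rewrite (Rabs_right (ln (INR d))); last lra.
have e : Rpower (INR d) (- (1 - 2 * s)) = Rpower (INR d) s * Rpower (INR d) s * / INR d.
  rewrite (_ : - (1 - 2 * s) = s + s + - (1)); last ring.
  rewrite !Rpower_plus Rpower_Ropp Rpower_1 //; lra.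
rewrite e.
have hE := Es_nonneg s d; have hp := Rpower_pos (INR d) s.
have hi : 0 < / INR d by apply: Rinv_0_lt_compat; lra.
have : ln (INR d) <= / s * Rpower (INR d) s by rewrite Rmult_comm.
move=> h.
have : Es s d * Rpower (INR d) s * ln (INR d) <= Es s d * Rpower (INR d) s * (/ s * Rpower (INR d) s).
  apply: Rmult_le_compat_l => //; nra.
move=> h2.
apply: Rle_trans (_ : Es s d * Rpower (INR d) s * (/ s * Rpower (INR d) s) * / INR d <= _).
  apply: Rmult_le_compat_r; lra.
right; ring.
Qed.

Lemma Rpower_ge1 x s : 1 <= x -> 0 <= s -> 1 <= Rpower x s.
Proof. move=> x1 s0; rewrite -(Rpower_O x); last lra. apply: Rle_Rpower => //. Qed.

Lemma asymptotic g K1 La :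
  (forall M, (0 < M)%N -> Rabs (H M - ln (INR M) - g) <= / INR M) ->
  Un_cv Tsum K1 -> Un_cv Lsum La ->
  forall eps : R, 0 < eps ->
    exists C X : R, 0 < X /\
      forall (x : R) (N : nat), X <= x -> INR N <= x < INR N + 1 ->
        Rabs (sum_inv_beta N - K1 * ln x - (g * K1 - La)) <= C * Rpower x (-1 + eps).
Proof.
move=> hg cvT cvL eps e0.
set s := Rmin eps (1/2) / 4.
have s0 : 0 < s by rewrite /s; apply: Rdiv_lt_0_compat; [apply: Rmin_glb_lt|]; lra.
have s1 : s <= eps / 4 by rewrite /s; have := Rmin_l eps (1/2); lra.
have s2 : s <= 1 / 8 by rewrite /s; have := Rmin_r eps (1/2); lra.
have [lT [cvT' bT]] := T_tail s s0 ltac:(lra).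
have [lL [cvL' bL]] := L_tail s s0 ltac:(lra).
have eT : lT = K1 by apply: UL_sequence cvT' cvT.
have eL : lL = La by apply: UL_sequence cvL' cvL.
subst lT lL.
have B0 : 0 <= Bs s by left; exact: exp_pos.
have is0 : 0 < / s by apply: Rinv_0_lt_compat.
exists (4 * Bs s + (/ s + Rabs g) * Bs s + / s * Bs s), 1; split; first lra.
move=> x N x1 [xl xu].
have x0 : 0 < x by lra.
have xN : x <= INR N.+1 by rewrite S_INR; lra.
have D1 : Rabs (sum_inv_beta N - ((ln x + g) * Tsum N - Lsum N)) <= 4 * Bs s * Rpower x (s - 1).
  rewrite exchange /Xsum /Tsum /Lsum -sum_scale -sum_sub -sum_sub.
  apply: Rle_trans; first exact: sum_abs.
  apply: Rle_trans (_ : \rsum_(d <- iota 1 N) (4 / x * Rpower x s * Es s d) <= _).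
    apply: sum_le => d; rewrite mem_iota => /andP[d1 dN].
    have hd : 1 <= INR d by apply: (le_INR 1); lia.
    have -> : gg d / INR d * H (N %/ d) - ((ln x + g) * (gg d / INR d) - gg d * ln (INR d) / INR d)
      = gg d / INR d * (H (N %/ d) - (ln x - ln (INR d) + g)) by field; lra.
    rewrite Rabs_mult.
    have := pointwise g x N d hg (conj xl xu) d1 ltac:(lia) => hp.
    rewrite /Rdiv Rabs_mult Rabs_Rinv ?(Rabs_right (INR d)); try lra.
    rewrite (Es_abs s) //.
    have hds : Rpower (INR d) s <= Rpower x s.
      apply: Rle_Rpower_l; first lra. split; first lra.
      apply: Rle_trans xl; apply: le_INR; lia.
    have hE := Es_nonneg s d; have hpos := Rpower_pos (INR d) s.
    have := Rabs_pos (H (N %/ d) - (ln x - ln (INR d) + g)) => ha.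
    have hid : 0 < / INR d by apply: Rinv_0_lt_compat; lra.
    have e4 : 4 * INR d / x * / INR d = 4 / x by field; lra.
    apply: Rle_trans (_ : Es s d * Rpower (INR d) s * / INR d * (4 * INR d / x) <= _).
      apply: Rmult_le_compat_l => //; apply: Rmult_le_pos; [apply: Rmult_le_pos|] ; lra.
    have -> : Es s d * Rpower (INR d) s * / INR d * (4 * INR d / x) = Es s d * Rpower (INR d) s * (4 / x) by field; lra.
    have : 0 < 4 / x by apply: Rdiv_lt_0_compat; lra.
    move=> h4; have : Es s d * Rpower (INR d) s * (4 / x) <= Es s d * Rpower x s * (4 / x).
      apply: Rmult_le_compat_r; [lra | apply: Rmult_le_compat_l => //].
    move=> h5; apply: Rle_trans h5 _; apply: Req_le; rewrite /Rdiv; field; lra.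
  rewrite sum_scale.
  have := partial_Es_bound s N s0 => hb.
  have : 0 < 4 / x * Rpower x s by apply: Rmult_lt_0_compat; [apply: Rdiv_lt_0_compat; lra | exact: Rpower_pos].
  have -> : Rpower x (s - 1) = / x * Rpower x s.
    rewrite (_ : s - 1 = s + - (1)); last ring.
    by rewrite Rpower_plus Rpower_Ropp Rpower_1 //; ring.
  move=> h; have : 4 / x * Rpower x s * (\rsum_(d <- iota 1 N) Es s d) <= 4 / x * Rpower x s * Bs s.
    apply: Rmult_le_compat_l; lra.
  rewrite /Rdiv; nra.
have hT := bT N x x0 xN; rewrite Rmult_1_l in hT.
have hL := bL N x x0 xN.
have lx : 0 <= ln x by rewrite -ln_1; apply: ln_le_mono; lra.
have lxb := ln_le_Rpower s x s0 x0.
have ps1 := Rpower_ge1 x s x1 ltac:(lra).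
have hlg : Rabs (ln x + g) <= (/ s + Rabs g) * Rpower x s.
  apply: Rle_trans; first exact: Rabs_triang.
  rewrite Rabs_right; last lra.
  have : Rabs g <= Rabs g * Rpower x s by have := Rabs_pos g; nra.
  have : ln x <= / s * Rpower x s by rewrite Rmult_comm.
  lra.
have pw1 : Rpower x (s - 1) <= Rpower x (-1 + eps) by apply: Rle_Rpower; lra.
have pw2 : Rpower x (- (1 - 2 * s)) <= Rpower x (-1 + eps) by apply: Rle_Rpower; lra.
have pw3 : Rpower x s * Rpower x (- (1 - s)) = Rpower x (- (1 - 2 * s)).
  by rewrite -Rpower_plus; congr Rpower; ring.
have -> : sum_inv_beta N - K1 * ln x - (g * K1 - La) =
  (sum_inv_beta N - ((ln x + g) * Tsum N - Lsum N)) + (ln x + g) * (Tsum N - K1) + (La - Lsum N).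
  ring.
apply: Rle_trans; first exact: Rabs_triang.
apply: Rle_trans; first (apply: Rplus_le_compat_r; exact: Rabs_triang).
rewrite Rabs_mult (Rabs_minus_sym (Tsum N)).
have hTT : Rabs (ln x + g) * Rabs (K1 - Tsum N) <= (/ s + Rabs g) * Bs s * Rpower x (- (1 - 2 * s)).
  rewrite -pw3.
  have := Rabs_pos (K1 - Tsum N); have := Rabs_pos (ln x + g).
  have := Rpower_pos x (- (1 - s)); have := Rpower_pos x s.
  have : 0 <= / s + Rabs g by have := Rabs_pos g; lra.
  move=> *.
  apply: Rle_trans (_ : ((/ s + Rabs g) * Rpower x s) * (Bs s * Rpower x (- (1 - s))) <= _).
    apply: Rmult_le_compat => //.
  right; ring.
have hp1 := Rpower_pos x (-1 + eps).
have : 4 * Bs s * Rpower x (s - 1) <= 4 * Bs s * Rpower x (-1 + eps) by apply: Rmult_le_compat_l; lra.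
have : (/ s + Rabs g) * Bs s * Rpower x (- (1 - 2 * s)) <= (/ s + Rabs g) * Bs s * Rpower x (-1 + eps).
  apply: Rmult_le_compat_l => //; apply: Rmult_le_pos => //; have := Rabs_pos g; lra.
have : / s * Bs s * Rpower x (- (1 - 2 * s)) <= / s * Bs s * Rpower x (-1 + eps).
  apply: Rmult_le_compat_l => //; apply: Rmult_le_pos; lra.
lra.
Qed.

Lemma inv_beta_pexp p a : prime p -> (0 < a)%N -> / beta (p ^ a)%N = fp p a / INR p ^ a.
Proof.
move=> pp a0; rewrite beta_pexp // /fp INR_expn.
have := beta_pp_pos p a pp; have : 0 < INR p ^ a by apply: pow_lt; have := INR_pos_p _ pp; lra.
move=> h1 h2; field; lra.
Qed.

Definition Sloc (p : nat) (K : nat) : R := sum_f_R0 (fun a => / beta (p ^ a.+1)%N) K.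

Lemma Sloc_bound p K : prime p -> 0 <= Sloc p K <= 3 - 3 * (/ 2) ^ K.+1.
Proof.
move=> pp; have P2 := INR_pos_p _ pp.
have tb : forall a, 0 <= / beta (p ^ a.+1)%N <= 3 * (/ 2) ^ a.+1.
  move=> a; rewrite inv_beta_pexp // pow_inv.
  have hf := fp_pos p a.+1 pp; have hf3 := fp_le3 p a.+1 pp.
  have h2 : 0 < 2 ^ a.+1 by apply: pow_lt; lra.
  have hP : 2 ^ a.+1 <= INR p ^ a.+1 by apply: pow_incr; lra.
  split; first by left; apply: Rdiv_lt_0_compat => //; lra.
  apply: Rle_trans (_ : 3 / INR p ^ a.+1 <= _).
    apply: Rmult_le_compat_r; first by left; apply: Rinv_0_lt_compat; lra. lra.
  apply: Rmult_le_compat_l; first lra. apply: Rinv_le_contravar; lra.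
rewrite /Sloc; elim: K => [|K IH].
  have := tb 0%N; rewrite /=; lra.
have := tb K.+1; rewrite /= in IH *; move=> h.
have : 0 < (/ 2) ^ K by apply: pow_lt; lra.
lra.
Qed.

Lemma Sloc_cv p : prime p -> {l | Un_cv (Sloc p) l}.
Proof.
move=> pp; apply: growing_cv.
  move=> n; rewrite /Sloc /=.
  have := Sloc_bound p n.+1 pp; have := Sloc_bound p n pp.
  move=> _ _; have : 0 <= / beta (p ^ n.+2)%N.
    rewrite inv_beta_pexp //; apply: div_nonneg; first by left; apply: fp_pos.
    apply: pow_lt; have := INR_pos_p _ pp; lra.
  lra.
exists 3 => x [i ->]; have := Sloc_bound p i pp; have : 0 < (/ 2) ^ i.+1.
  apply: pow_lt; lra.
lra.
Qed.

Definition qp (p : nat) : nat := if prime p then p else 2%N.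
Lemma qp_prime p : prime (qp p).
Proof. by rewrite /qp; case: ifP. Qed.

Definition fl (p : nat) : R := proj1_sig (Sloc_cv (qp p) (qp_prime p)).

Lemma fl_spec p : prime p -> infinite_sum (fun a : nat => / beta (expn p a.+1)) (fl p).
Proof.
move=> pp; have h := proj2_sig (Sloc_cv (qp p) (qp_prime p)).
have e : qp p = p by rewrite /qp pp.
rewrite -/(fl p) e in h; exact: h.
Qed.

Definition hh (d : nat) : R := gg d / INR d.

Definition Loc (p K : nat) : R := \big[Rplus/0]_(0 <= j < K.+1) hh (p ^ j)%N.

Lemma Loc_id p K : prime p ->
  Loc p K.+1 = (1 - / INR p) * (1 + Sloc p K) + / INR p * / beta (p ^ K.+1)%N.
Proof.
move=> pp; have P2 := INR_pos_p _ pp.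
have hhp : forall j, (0 < j)%N -> hh (p ^ j)%N = gp p j / INR p ^ j.
  by move=> j j0; rewrite /hh /gg mult_pexp // INR_expn.
elim: K => [|K IH].
  rewrite /Loc big_nat_recr //= big_nat1; nb.
  have h0 : hh (p ^ 0)%N = 1 by rewrite expn0 /hh /gg /mult /= big_nil; field.
  rewrite h0 (hhp 1%N) // /Sloc /= inv_beta_pexp // /gp /= fp0 //.
  field; lra.
rewrite /Loc big_nat_recr //=; nb; rewrite -/(Loc p K.+1) IH (hhp K.+2) //.
rewrite /Sloc /= -/(Sloc p K) !inv_beta_pexp // /gp /=.
have : 0 < INR p ^ K by apply: pow_lt; lra.
move=> h; field; lra.
Qed.

Lemma cv_const c : Un_cv (fun _ => c) c.
Proof. move=> e e0; exists 0%N => n _; rewrite /R_dist Rminus_diag Rabs_R0 //. Qed.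

Lemma cv_ext (u v : nat -> R) l : (forall n, u n = v n) -> Un_cv u l -> Un_cv v l.
Proof. move=> e cv eps e0; have [N hN] := cv eps e0; exists N => n nN; rewrite -e; exact: hN. Qed.

Lemma prod_cv (s : seq nat) (u : nat -> nat -> R) (l : nat -> R) :
  (forall p, p \in s -> Un_cv (u p) (l p)) ->
  Un_cv (fun K => \rprod_(p <- s) u p K) (\rprod_(p <- s) l p).
Proof.
elim: s => [|x s IH] h.
  rewrite big_nil; apply: cv_ext (cv_const 1) => n; by rewrite big_nil.
rewrite big_cons; nb.
apply: cv_ext (CV_mult _ _ _ _ (h x (mem_head _ _)) (IH _)).
  by move=> n; rewrite big_cons; nb.
by move=> p hp; apply: h; rewrite in_cons hp orbT.
Qed.

Lemma tail_term_cv p : prime p -> Un_cv (fun K => / INR p * / beta (p ^ K.+1)%N) 0.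
Proof.
move=> pp; have P2 := INR_pos_p _ pp.
move=> e e0; have [N hN] := pow_lt_1_zero (/ 2) ltac:(rewrite Rabs_right; lra) (e / 3) ltac:(lra).
exists N => n nN; rewrite /R_dist Rminus_0_r.
have := hN n nN; rewrite Rabs_right; last by apply: Rle_ge; apply: pow_le; lra.
move=> h.
have tb : 0 <= / beta (p ^ n.+1)%N <= 3 * (/ 2) ^ n.+1.
  rewrite inv_beta_pexp // pow_inv.
  have hf := fp_pos p n.+1 pp; have hf3 := fp_le3 p n.+1 pp.
  have h2 : 0 < 2 ^ n.+1 by apply: pow_lt; lra.
  have hP : 2 ^ n.+1 <= INR p ^ n.+1 by apply: pow_incr; lra.
  split; first by left; apply: Rdiv_lt_0_compat => //; lra.
  apply: Rle_trans (_ : 3 / INR p ^ n.+1 <= _).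
    apply: Rmult_le_compat_r; first by left; apply: Rinv_0_lt_compat; lra. lra.
  apply: Rmult_le_compat_l; first lra. apply: Rinv_le_contravar; lra.
have ip : 0 < / INR p <= 1 / 2.
  split; first by apply: Rinv_0_lt_compat; lra.
  have := Rinv_le_contravar 2 (INR p) ltac:(lra) P2; lra.
rewrite Rabs_right; last by apply: Rle_ge; apply: Rmult_le_pos; lra.
have : 0 <= (/ 2) ^ n by apply: pow_le; lra.
rewrite /= in tb; nra.
Qed.

Lemma Loc_cv p : prime p -> Un_cv (fun K => Loc p K.+1) ((1 - / INR p) * (1 + fl p)).
Proof.
move=> pp; have h := fl_spec p pp.
apply: cv_ext.
  move=> n; symmetry; exact: Loc_id.
rewrite -(Rplus_0_r ((1 - / INR p) * (1 + fl p))).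
apply: CV_plus; last exact: tail_term_cv.
apply: CV_mult; first exact: cv_const.
apply: CV_plus; first exact: cv_const.
exact: h.
Qed.

Definition sN (N : nat) : seq nat := [seq p <- iota 0 N | prime p].
Definition LK (K N : nat) : nat := \prod_(p <- sN N) p ^ K.

Lemma invINR_mult : multiplicative (fun d => / INR d).
Proof.
split; first by rewrite /= Rinv_1.
by move=> m n _; rewrite mult_INR Rinv_mult.
Qed.

Lemma hh_mult : multiplicative hh.
Proof.
apply: mult_mul (mult_multiplicative gp) invINR_mult.
Qed.

Lemma sN_uniq N : uniq (sN N).
Proof. by rewrite /sN filter_uniq // iota_uniq. Qed.

Lemma sN_prime N : all prime (sN N).
Proof. by apply/allP => p; rewrite mem_filter => /andP[]. Qed.

Lemma Dsum_LK K N : Dsum hh (LK K N) = \rprod_(p <- sN N) Loc p K.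
Proof.
rewrite /LK (mult_prod_pp _ _ (fun _ => K)) //; last exact: sN_prime.
  2: apply: Dsum_mult; exact: hh_mult.
  2: exact: sN_uniq.
apply: eq_big_seq => p; rewrite mem_filter => /andP[pp _].
by rewrite Dsum_pexp.
Qed.

Lemma euler_prodE N : partial_euler_prod fl N = \rprod_(p <- sN N) ((1 - / INR p) * (1 + fl p)).
Proof. by rewrite /partial_euler_prod unlock. Qed.

Lemma LK_gt0 K N : (0 < LK K N)%N.
Proof.
rewrite /LK; elim: (sN N) (sN_prime N) => [|p s IH] /=; first by rewrite big_nil.
move=> /andP[pp ps]; rewrite big_cons muln_gt0 expn_gt0 prime_gt0 //=; exact: IH.
Qed.

Lemma dvd_LK d K N : (0 < d)%N -> (d < N)%N -> (N <= K)%N -> d %| LK K N.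
Proof.
move=> d0 dN NK; apply/(dvdn_partP _ d0) => p; rewrite mem_primes => /and3P[pp _ pd].
rewrite p_part.
have pin : p \in sN N by rewrite mem_filter pp mem_iota /=; have := dvdn_leq d0 pd; lia.
have lp : (logn p d <= K)%N.
  have h1 := ltn_expl (logn p d) (prime_gt1 pp).
  have h2 := dvdn_leq d0 (pfactor_dvdnn p d); lia.
apply: dvdn_trans (dvdn_exp2l p lp) _.
by rewrite /LK (big_rem _ pin) /= dvdn_mulr.
Qed.

Lemma Es_half_bound d N : (0 < N)%N -> (N <= d)%N ->
  Rabs (hh d) <= Es (1/2) d * Rpower (INR N) (- (1/2)).
Proof.
move=> N0 Nd; have hd : 0 < INR d by apply: lt_0_INR; lia.
rewrite /hh /Rdiv Rabs_mult (Es_abs (1/2)); last lia.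
rewrite Rabs_Rinv ?Rabs_right; try lra.
have e : Rpower (INR d) (1/2) * / INR d = Rpower (INR d) (- (1/2)).
  rewrite (_ : - (1/2) = 1/2 + - (1)); last lra.
  rewrite Rpower_plus Rpower_Ropp Rpower_1 //.
rewrite Rmult_assoc e; apply: Rmult_le_compat_l; first exact: Es_nonneg.
apply: Rpower_neg_anti; [lra | apply: lt_0_INR; lia | apply: le_INR; lia].
Qed.

Lemma LK_close K N : (0 < N)%N -> (N <= K)%N ->
  Rabs (Dsum hh (LK K N) - Tsum N.-1) <= Bs (1/2) * Rpower (INR N) (- (1/2)).
Proof.
move=> N0 NK.
set L := LK K N.
have L0 : (0 < L)%N := LK_gt0 K N.
have pe : perm_eq (divisors L)
   ([seq d <- divisors L | (d < N)%N] ++ [seq d <- divisors L | predC (fun d => (d < N)%N) d]).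
  by rewrite perm_sym perm_filterC.
have pe2 : perm_eq [seq d <- divisors L | (d < N)%N] (iota 1 N.-1).
  apply: uniq_perm; [by rewrite filter_uniq // divisors_uniq | exact: iota_uniq |].
  move=> d; rewrite mem_filter mem_iota -dvdn_divisors //.
  apply/idP/idP.
    move=> /andP[dN dL]; have := dvdn_gt0 L0 dL.
    lia.
  move=> /andP[d1 dN]; rewrite (_ : (d < N)%N) /=; last lia.
  apply: dvd_LK; lia.
rewrite /Dsum (perm_big _ pe) big_cat (perm_big _ pe2) /Tsum; nb.
rewrite -/(hh _).
have -> : forall a b : R, a + b - a = b by move=> a b; ring.
apply: Rle_trans; first exact: sum_abs.
apply: Rle_trans.
  apply: (sum_le _ _ (fun d => Es (1/2) d * Rpower (INR N) (- (1/2)))) => d.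
  rewrite mem_filter /= -leqNgt => /andP[Nd _]; exact: Es_half_bound.
rewrite -big_distrl; apply: Rmult_le_compat_r; first by left; exact: Rpower_pos.
apply: Rle_trans (Dsum_Es_bound (1/2) L ltac:(lra) L0).
apply: sum_sub_le; [by rewrite filter_uniq // divisors_uniq | exact: divisors_uniq | |].
  by move=> d; rewrite mem_filter => /andP[].
move=> i _; exact: Es_nonneg.
Qed.

Lemma euler_close N : (0 < N)%N ->
  Rabs (partial_euler_prod fl N - Tsum N.-1) <= Bs (1/2) * Rpower (INR N) (- (1/2)).
Proof.
move=> N0.
have cv : Un_cv (fun K => Dsum hh (LK K.+1 N)) (partial_euler_prod fl N).
  rewrite euler_prodE.
  apply: cv_ext; first by move=> K; rewrite Dsum_LK.
  apply: (prod_cv _ (fun p K => Loc p K.+1)) => p.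
  rewrite mem_filter => /andP[pp _]; exact: Loc_cv.
apply: (lim_abs_le _ _ _ _ N cv) => K NK.
apply: LK_close => //; lia.
Qed.

Lemma euler_cv K1 : Un_cv Tsum K1 -> Un_cv (partial_euler_prod fl) K1.
Proof.
move=> cvT eps e0.
have B0 : 0 < Bs (1/2) by exact: exp_pos.
have [N1 h1] := cvT (eps / 2) ltac:(lra).
have [N2 h2] := Rpower_small (1/2) (eps / (2 * Bs (1/2))) ltac:(lra)
   ltac:(apply: Rdiv_lt_0_compat; lra).
exists (maxn N1 N2).+1 => n nN.
have nN' : ((maxn N1 N2).+1 <= n)%N by apply/leP.
have := euler_close n ltac:(lia).
have := h1 n.-1 ltac:(apply/leP; lia).
have := h2 n.-1 ltac:(lia).
rewrite prednK; last lia.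
rewrite /R_dist => ha hb hc.
have : Bs (1/2) * Rpower (INR n) (- (1/2)) < Bs (1/2) * (eps / (2 * Bs (1/2))).
  by apply: Rmult_lt_compat_l.
have -> : Bs (1/2) * (eps / (2 * Bs (1/2))) = eps / 2 by field; lra.
move=> hd.
have := Rabs_triang (partial_euler_prod fl n - Tsum n.-1) (Tsum n.-1 - K1).
have -> : partial_euler_prod fl n - Tsum n.-1 + (Tsum n.-1 - K1) = partial_euler_prod fl n - K1 by ring.
lra.
Qed.

Theorem mainTheorem5 :
  exists K1 K2 : R,
    (exists f : nat -> R,
        (forall p : nat, prime p ->
           infinite_sum (fun a : nat => / beta (expn p a.+1)) (f p)) /\
        Un_cv (partial_euler_prod f) K1) /\
    (forall eps : R, 0 < eps ->
       exists C X : R, 0 < X /\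
         forall (x : R) (N : nat), X <= x -> INR N <= x < INR N + 1 ->
           Rabs (sum_inv_beta N - K1 * ln x - K2) <= C * Rpower x (-1 + eps)).
Proof.
have [K1 [cvT _]] := T_tail (1/2) ltac:(lra) ltac:(lra).
have [La [cvL _]] := L_tail (1/4) ltac:(lra) ltac:(lra).
have [g hg] := gamma_ex.
exists K1, (g * K1 - La); split.
  exists fl; split; first exact: fl_spec.
  exact: euler_cv.
exact: asymptotic.
Qed.
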